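(* Let $X\subset\mathbb{R}^n$ be a finite set of points, let $\mathcal O$ be an order ideal and let $\mathcal B$ be an $\mathcal O$-border basis of the vanishing ideal $\mathcal I(X)$. Then for every $g\in\mathcal B$, $\mathfrak n_{\mathrm g}(g;X)\neq\boldsymbol 0$.
   Context: $\mathcal I(X)=\{g\in\mathbb{R}[x_1,\ldots,x_n]:g(\boldsymbol x)=0\ \forall\boldsymbol x\in X\}$. A term is a monomial $x_1^{a_1}\cdots x_n^{a_n}$. An order ideal $\mathcal O$ is a finite set of terms such that every term dividing an element of $\mathcal O$ belongs to $\mathcal O$. Its border is $\partial\mathcal O=\{x_ko:o\in\mathcal O,k=1,\ldots,n\}\setminus\mathcal O$. An $\mathcal O$-border basis of $\mathcal I(X)$ is a set of polynomials $\mathcal B\subset\mathcal I(X)$ generating $\mathcal I(X)$, each of the form $g=b-\sum_{o\in\mathcal O}c_oo$ with $b\in\partial\mathcal O$ and $c_o\in\mathbb R$, such that the residue classes of the terms of $\mathcal O$ form a basis of $\mathbb{R}[x_1,\ldots,x_n]/\mathcal I(X)$ (equivalently, the evaluation vectors of the terms of $\mathcal O$ at $X$ are linearly independent and span $\mathbb{R}^{|X|}$). $\mathfrak n_{\mathrm g}(g;X)=\mathrm{vec}(\nabla g(X))$, where $\nabla g(X)$ is the $|X|\times n$ matrix whose rows are the gradients of $g$ at the points of $X$. *)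

(* Defs.v *)
From HB Require Import structures.
From mathcomp Require Import all_boot all_order all_algebra.
From mathcomp Require Import finmap.
From mathcomp Require Import mpoly.
From mathcomp Require Import reals.
Set Implicit Arguments. Unset Strict Implicit. Unset Printing Implicit Defensive.
Import Order.TTheory GRing.Theory Num.Theory.
Local Open Scope ring_scope.
Local Open Scope fset_scope.

Section BorderBasis.
Variables (R : realType) (n : nat).

Definition evalpt (p : {mpoly R[n]}) (x : 'rV[R]_n) : R :=
  p.@[fun i => x ord0 i].

Definition in_vanishing_ideal (X : seq 'rV[R]_n) (g : {mpoly R[n]}) : Prop :=
  forall x, x \in X -> evalpt g x = 0.

Definition order_ideal (O : {fset 'X_{1..n}}) : Prop :=
  forall m m' : 'X_{1..n}, m \in O -> (forall i, m' i <= m i)%N -> m' \in O.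

Definition in_border (O : {fset 'X_{1..n}}) (b : 'X_{1..n}) : Prop :=
  b \notin O /\ exists2 o, o \in O & exists k : 'I_n, b = (o + U_(k))%MM.

Definition border_basis (X : seq 'rV[R]_n) (O : {fset 'X_{1..n}})
    (B : {fset {mpoly R[n]}}) : Prop :=
  [/\
      forall g, g \in B -> in_vanishing_ideal X g,
      forall f, in_vanishing_ideal X f ->
        exists h : {mpoly R[n]} -> {mpoly R[n]}, f = \sum_(g <- B) h g * g,
      forall g, g \in B -> exists b, exists c : 'X_{1..n} -> R,
        in_border O b /\ g = 'X_[b] - \sum_(o <- O) c o *: 'X_[o],
      forall f, exists c : 'X_{1..n} -> R,
        in_vanishing_ideal X (f - \sum_(o <- O) c o *: 'X_[o])
    &
      forall c : 'X_{1..n} -> R,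
        in_vanishing_ideal X (\sum_(o <- O) c o *: 'X_[o]) ->
        forall o, o \in O -> c o = 0 ].

(* n_g(g;X) = vec(grad g(X)), with grad g(X) the |X| x n matrix whose rows
   are the gradients of g at the points of X (listed in the order of X). *)
Definition grad_mat (g : {mpoly R[n]}) (X : seq 'rV[R]_n) : 'M[R]_(size X, n) :=
  \matrix_(i < size X, k < n) evalpt (mderiv k g) (nth 0 X i).

Definition ngrad (g : {mpoly R[n]}) (X : seq 'rV[R]_n) : 'rV[R]_(size X * n) :=
  mxvec (grad_mat g X).

End BorderBasis.

(* Main.v *)
Require Import Defs.
From HB Require Import structures.
From mathcomp Require Import all_boot all_order all_algebra.
From mathcomp Require Import finmap.
From mathcomp Require Import mpoly.
From mathcomp Require Import reals.
Local Open Scope ring_scope.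
Local Open Scope fset_scope.
Import GRing.Theory Num.Theory.

Lemma sum_coef (R : realType) (n : nat) (O : {fset 'X_{1..n}})
  (a : 'X_{1..n} -> R) (m : 'X_{1..n}) :
  (\sum_(o <- O) a o *: ('X_[o] : {mpoly R[n]}))@_m = if m \in O then a m else 0.
Proof.
rewrite raddf_sum /=.
under eq_bigr => o _ do rewrite mcoeffZ mcoeffX.
case: ifP => hm.
- rewrite (bigD1_seq m) ?fset_uniq //= ?eqxx ?mulr1 ?big1 ?addr0 //.
  by move=> o /negbTE ->; rewrite mulr0.
- rewrite big1_seq // => o /andP [_ ho].
  have hne : (o == m) = false.
    by apply/negbTE/negP => /eqP e; rewrite -e ho in hm.
  by rewrite hne mulr0.
Qed.

Theorem proposition4 (R : realType) (n : nat) (X : seq 'rV[R]_n)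
    (O : {fset 'X_{1..n}}) (B : {fset {mpoly R[n]}}) :
  uniq X -> order_ideal O -> border_basis X O B ->
  forall g, g \in B -> ngrad g X != 0.
Proof.
move=> _ oi [_ _ hform _ hind] g gB.
have [b [c [[bnO [o oO [k bE]]] gE]]] := hform g gB.
apply/negP => /eqP h0.
have hv : in_vanishing_ideal X (mderiv k g).
  move=> x xX.
  have ilt : (index x X < size X)%N by rewrite index_mem.
  have := congr1 (fun v : 'rV[R]_(size X * n) => v 0 (mxvec_index (Ordinal ilt) k)) h0.
  rewrite /ngrad mxvecE mxE /= nth_index // => ->.
  by rewrite mxE.
set d := mderiv k g.
have dE : d = \sum_(o <- O) d@_o *: 'X_[o].
  apply/mpolyP => m; rewrite sum_coef; case: ifP => // mO.
  rewrite /d mcoeff_deriv gE mcoeffB sum_coef mcoeffX.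
  case: (boolP (m + U_(k) \in O))%MM => h1.
    have : m \in O.
      apply: (oi _ _ h1) => i; rewrite mnmDE; exact: leq_addr.
    by rewrite mO.
  case: eqP => e.
    rewrite bE in e; have e' := addIm e.
    by rewrite -e' oO in mO.
  by rewrite subr0 mul0rn.
have := hind (fun m => d@_m) ltac:(by rewrite -dE) o oO.
rewrite /d mcoeff_deriv gE mcoeffB sum_coef mcoeffX -bE eqxx (negbTE bnO) subr0.
by move/eqP; rewrite pnatr_eq0.
Qed.
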